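(* Consider a constrained online convex optimization problem: $\mathcal{F}\subset\mathbb{R}^d$ is a convex set with bounded $\ell_\infty$-diameter $D_\infty=\max_{\boldsymbol{x},\boldsymbol{y}\in\mathcal{F}}\Vert\boldsymbol{x}-\boldsymbol{y}\Vert_\infty$, and $f_1,\dots,f_T$ are convex loss functions with $\Vert\nabla f_t(\boldsymbol{\theta})\Vert_\infty\le G_\infty$ for all $t\in[T]$ and $\boldsymbol{\theta}\in\mathcal{F}$. Let the iterates $\boldsymbol{\theta}_t\in\mathcal{F}$ be generated by AdaSGDMax with step size $\eta_t=\eta/\sqrt{t\hat v_t/d}$ for some $\eta>0$, and assume $\hat v_1>0$. Then the regret $R_T:=\sum_{t=1}^T f_t(\boldsymbol{\theta}_t)-\min_{\boldsymbol{\theta}^*\in\mathcal{F}}\sum_{t=1}^T f_t(\boldsymbol{\theta}^* )$ satisfies $$R_T\le \frac{D_\infty^2\sqrt{d\hat v_T T}}{2\eta}+\frac{d^{3/2}G_\infty^2\eta(2\sqrt{T}-1)}{2\sqrt{\hat v_1}}.$$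
   Context: AdaSGDMax in the online setting: with $\boldsymbol{g}_t=\nabla f_t(\boldsymbol{\theta}_t)$, $v_0=0$, $\hat v_0=0$ and a fixed $\beta_2\in[0,1)$, set $v_t=\beta_2 v_{t-1}+(1-\beta_2)\Vert\boldsymbol{g}_t\Vert_2^2$, $\hat v_t=\max\{\hat v_{t-1},v_t\}$, and $\boldsymbol{\theta}_{t+1}=\Pi_{\mathcal{F}}(\boldsymbol{\theta}_t-\eta_t\boldsymbol{g}_t)$, where $\Pi_{\mathcal{F}}(\boldsymbol{x})=\arg\min_{\boldsymbol{y}\in\mathcal{F}}\Vert\boldsymbol{x}-\boldsymbol{y}\Vert_2$ is Euclidean projection and $\boldsymbol{\theta}_1\in\mathcal{F}$. *)

(* Defs.v *)
From HB Require Import structures.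
From mathcomp Require Import all_boot all_order all_algebra.
From mathcomp Require Import all_classical all_reals all_analysis.
Set Implicit Arguments. Unset Strict Implicit. Unset Printing Implicit Defensive.
Import Order.TTheory GRing.Theory Num.Theory.
Import numFieldNormedType.Exports.
Local Open Scope classical_set_scope.
Local Open Scope ring_scope.

Definition grad (R : realType) (d : nat) (f : 'rV[R]_d -> R^o) (x : 'rV[R]_d)
  : 'rV[R]_d := \row_i ('d f x) (delta_mx 0 i).

Definition linf_norm (R : realType) (d : nat) (x : 'rV[R]_d) : R :=
  \big[Num.max/0]_i `|x 0 i|.

Definition l2_sq (R : realType) (d : nat) (x : 'rV[R]_d) : R :=
  \sum_i (x 0 i) ^+ 2.

(* v_0 = 0, v_t = b v_{t-1} + (1-b) s_t  (s_t = ||g_t||_2^2) *)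
Fixpoint ada_v (R : realType) (b : R) (s : nat -> R) (t : nat) : R :=
  match t with
  | 0 => 0
  | t'.+1 => b * ada_v b s t' + (1 - b) * s t'.+1
  end.

Fixpoint ada_vhat (R : realType) (b : R) (s : nat -> R) (t : nat) : R :=
  match t with
  | 0 => 0
  | t'.+1 => Num.max (ada_vhat b s t') (ada_v b s t'.+1)
  end.

(* Main.v *)
Require Import Defs.
From HB Require Import structures.
From mathcomp Require Import all_boot all_order all_algebra.
From mathcomp Require Import all_classical all_reals all_analysis.
From mathcomp Require Import ring lra.
Import Order.TTheory GRing.Theory Num.Theory.
Import numFieldNormedType.Exports.
Local Open Scope classical_set_scope.
Local Open Scope ring_scope.
Set Implicit Arguments. Unset Strict Implicit. Unset Printing Implicit Defensive.
Lemma conv_grad (R : realType) d (F : set 'rV[R]_d) (f : 'rV[R]_d -> R^o) x y :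
  (forall x y, F x -> F y -> forall l : R, 0 <= l <= 1 ->
     f (l *: x + (1 - l) *: y) <= l * f x + (1 - l) * f y) ->
  differentiable f x -> F x -> F y ->
  'd f x (y - x) <= f y - f x.
Proof.
move=> cvx dfx Fx Fy.
rewrite -deriveE //.
have := @diff_derivable _ _ _ f x (y - x) dfx.
rewrite /derivable /derive => /cvg_ex [L HL].
have HL' : (fun h : R => h^-1 *: ((f \o shift x) (h *: (y - x)) - f x)) @ 0^'+ --> L.
  apply: cvg_trans HL => P [e e0 He]; exists e => // z dz z0; apply: He => //.
  by rewrite gt_eqF.
rewrite (cvg_lim _ HL) //.
apply: (cvgr_to_le HL').
near=> h.
have h0 : 0 < h by near: h; exact: nbhs_right_gt.
have h1 : h <= 1 by near: h; apply: nbhs_right_le; exact: ltr01.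
rewrite /= -[_ *: _]/(h^-1 * _) ler_pdivrMl // .
have -> : h *: (y - x) + x = h *: y + (1 - h) *: x.
  by rewrite scalerBr scalerBl scale1r -addrA (addrC (- _)).
have := cvx y x Fy Fx h; rewrite ltW //= h1 => /(_ isT) H.
lra.
Unshelve. all: by end_near.
Qed.
Definition dot (R : realType) d (u v : 'rV[R]_d) : R := \sum_i u 0 i * v 0 i.

Lemma d_grad (R : realType) d (f : 'rV[R]_d -> R^o) x v :
  'd f x v = dot (grad f x) v.
Proof.
rewrite {1}(row_sum_delta v) linear_sum; apply: eq_bigr => i _.
by rewrite linearZ mxE /= mulrC.
Qed.

Lemma l2_sqB (R : realType) d (u v : 'rV[R]_d) (c : R) :
  l2_sq (u - c *: v) = l2_sq u - 2 * c * dot u v + c ^+ 2 * l2_sq v.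
Proof.
rewrite /l2_sq /dot !mulr_sumr -sumrN -!big_split /=; apply: eq_bigr => i _.
rewrite !mxE; ring.
Qed.

Lemma l2_sqN (R : realType) d (u : 'rV[R]_d) : l2_sq (- u) = l2_sq u.
Proof. by apply: eq_bigr => i _; rewrite mxE sqrrN. Qed.

Lemma l2_sq_ge0 (R : realType) d (u : 'rV[R]_d) : 0 <= l2_sq u.
Proof. by apply: sumr_ge0 => i _; rewrite sqr_ge0. Qed.

Lemma proj_nonexp (R : realType) d (F : set 'rV[R]_d) x P y :
  (forall x y, F x -> F y -> forall l : R, 0 <= l <= 1 ->
     F (l *: x + (1 - l) *: y)) ->
  F P -> (forall z, F z -> l2_sq (x - P) <= l2_sq (x - z)) -> F y ->
  l2_sq (P - y) <= l2_sq (x - y).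
Proof.
move=> cvx FP Pmin Fy.
set A := l2_sq (x - P); set B := l2_sq (y - P); set C := dot (x - P) (y - P).
have hl : forall l : R, 0 <= l <= 1 -> A <= A - 2 * l * C + l ^+ 2 * B.
  move=> l hl; rewrite -l2_sqB.
  have -> : x - P - l *: (y - P) = x - (l *: y + (1 - l) *: P).
    by apply/rowP => i; rewrite !mxE; ring.
  exact/Pmin/cvx.
have B0 : 0 <= B by exact: l2_sq_ge0.
have C0 : C <= 0.
  rewrite leNgt; apply/negP => Cp.
  have CB : 0 < C + B by lra.
  have := hl (C / (C + B)).
  have l0 : 0 <= C / (C + B) by rewrite divr_ge0 // ltW.
  have l1 : C / (C + B) <= 1 by rewrite ler_pdivrMr // mul1r; lra.
  rewrite l0 l1 => /(_ isT).
  set l := C / (C + B) => H.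
  have lp : 0 < l by rewrite divr_gt0.
  have e : l * (C + B) = C by rewrite /l mulfVK // gt_eqF.
  have H2 : 0 <= l * (l * B - 2 * C) by lra.
  rewrite pmulr_rge0 // in H2.
  move: e; rewrite mulrDr => e.
  have : 0 < l * C by rewrite mulr_gt0.
  lra.
have -> : P - y = - (y - P) by rewrite opprB.
have -> : x - y = (x - P) - 1 *: (y - P).
  by apply/rowP => i; rewrite !mxE; ring.
rewrite l2_sqN l2_sqB -/A -/B -/C expr1n mulr1 mul1r.
have : 0 <= A by exact: l2_sq_ge0.
lra.
Qed.
Lemma telesc (R : realType) (w A : nat -> R) (M : R) n :
  (0 < n)%N -> (forall t, (1 <= t <= n)%N -> A t <= M) ->
  (forall t, (1 <= t < n)%N -> w t <= w t.+1) -> 0 <= w 1%N ->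
  \sum_(1 <= t < n.+1) w t * (A t - A t.+1) + w n * A n.+1 <= w n * M.
Proof.
elim: n => [//|n IH] _ hA hw w1.
case: n IH hA hw => [|n] IH hA hw.
  rewrite big_nat1 -mulrDr subrK ler_wpM2l //; exact: hA.
rewrite big_nat_recr //=.
have := IH isT (fun t ht => hA t (ltac:(move/andP: ht => [h1 h2]; rewrite h1 /=; exact: leqW h2)))
  (fun t ht => hw t (ltac:(move/andP: ht => [h1 h2]; rewrite h1 /=; exact: ltnW h2))).
have := hA n.+2 (ltac:(by rewrite leqnn)); have := hw n.+1 (ltac:(by rewrite leqnn)).
set S := \sum_(_ <= _ < _) _.
move=> h1 h2 h3.
have : 0 <= (w n.+2 - w n.+1) * (M - A n.+2) by apply: mulr_ge0; lra.
lra.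
Qed.

Lemma sum_isqrt (R : realType) n : (0 < n)%N ->
  \sum_(1 <= t < n.+1) (Num.sqrt (t%:R : R))^-1 <= 2 * Num.sqrt n%:R - 1.
Proof.
elim: n => [//|n IH] _.
case: n IH => [|n] IH.
  rewrite big_nat1 sqrtr1 invr1 mulr1 [_ - 1](_ : _ = 1) //; ring.
rewrite big_nat_recr //=.
have := IH isT.
set a := Num.sqrt (n.+1%:R : R); set b := Num.sqrt (n.+2%:R : R).
have a0 : 0 <= a by exact: sqrtr_ge0.
have b0 : 0 < b by rewrite sqrtr_gt0 ltr0n.
have ea : a ^+ 2 = n.+1%:R by rewrite sqr_sqrtr // ler0n.
have eb : b ^+ 2 = n.+2%:R by rewrite sqr_sqrtr // ler0n.
have eab : b ^+ 2 = a ^+ 2 + 1 by rewrite ea eb -addn1 natrD.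
have key : 2 * a * b <= 2 * a ^+ 2 + 1.
  rewrite leNgt; apply/negP => H.
  have H2 : (2 * a ^+ 2 + 1) ^+ 2 < (2 * a * b) ^+ 2.
    have hx : 0 <= 2 * a ^+ 2 + 1 by have := sqr_ge0 a; lra.
    nra.
  move: H2; rewrite exprMn eab; lra.
have : b^-1 <= 2 * b - 2 * a.
  rewrite -[b^-1]mul1r ler_pdivrMr // mulrBl -mulrA -expr2; nra.
lra.
Qed.

Lemma linf_ge (R : realType) d (x : 'rV[R]_d) i : `|x 0 i| <= linf_norm x.
Proof. by rewrite /linf_norm (bigD1 i) //= le_max lexx. Qed.

Lemma l2_le_linf (R : realType) d (u : 'rV[R]_d) D :
  linf_norm u <= D -> l2_sq u <= d%:R * D ^+ 2.
Proof.
move=> hD; rewrite /l2_sq.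
have -> : d%:R * D ^+ 2 = \sum_(i < d) D ^+ 2 by rewrite sumr_const card_ord mulr_natl.
apply: ler_sum => i _.
have h1 := le_trans (linf_ge u i) hD.
have h0 : 0 <= `|u 0 i| by [].
rewrite -(real_normK (num_real (u 0 i))); nra.
Qed.

Lemma dot_sym (R : realType) d (u v : 'rV[R]_d) : dot u v = dot v u.
Proof. by apply: eq_bigr => i _; rewrite mulrC. Qed.

Lemma dot_oppB (R : realType) d (g x y : 'rV[R]_d) : dot g (y - x) = - dot g (x - y).
Proof. rewrite /dot -sumrN; apply: eq_bigr => i _; rewrite !mxE; ring. Qed.

Lemma step_lem (R : realType) d (F : set 'rV[R]_d) (f : 'rV[R]_d -> R^o) th ts e An :
  (forall x y, F x -> F y -> forall l : R, 0 <= l <= 1 ->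
     f (l *: x + (1 - l) *: y) <= l * f x + (1 - l) * f y) ->
  differentiable f th -> F th -> F ts -> 0 < e ->
  An <= l2_sq (th - e *: grad f th - ts) ->
  f th - f ts <= (l2_sq (th - ts) - An) / (2 * e) + e / 2 * l2_sq (grad f th).
Proof.
move=> cvx df Fth Fts e0 hAn.
have := conv_grad cvx df Fth Fts; rewrite d_grad dot_oppB => hc.
have E : th - e *: grad f th - ts = (th - ts) - e *: grad f th.
  by apply/rowP => i; rewrite !mxE; ring.
move: hAn; rewrite E l2_sqB dot_sym.
set A := l2_sq (th - ts); set C := dot _ _; set G := l2_sq _ => hAn.
have : C <= (A - An) / (2 * e) + e / 2 * G.
  rewrite -(ler_pM2r (_ : 0 < 2 * e)); last by rewrite mulr_gt0.
  have -> : ((A - An) / (2 * e) + e / 2 * G) * (2 * e) = A - An + e ^+ 2 * G.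
    by field; rewrite gt_eqF.
  lra.
have hc2 : - C <= f ts - f th by exact: hc.
lra.
Qed.

Theorem theorem3p2 (R : realType) (d T : nat)
  (F : set 'rV[R]_d) (f : nat -> 'rV[R]_d -> R^o) (theta : nat -> 'rV[R]_d)
  (Dinf Ginf eta beta2 : R) :
  (0 < T)%N ->
  (* F convex *)
  (forall x y, F x -> F y -> forall l : R, 0 <= l <= 1 ->
     F (l *: x + (1 - l) *: y)) ->
  (* l_infinity diameter of F bounded by Dinf *)
  (forall x y, F x -> F y -> linf_norm (x - y) <= Dinf) ->
  (* each f_t (t in [T]) is convex on F and differentiable on F *)
  (forall t, (1 <= t <= T)%N -> forall x y, F x -> F y ->
     forall l : R, 0 <= l <= 1 ->
     f t (l *: x + (1 - l) *: y) <= l * f t x + (1 - l) * f t y) ->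
  (forall t, (1 <= t <= T)%N -> forall x, F x -> differentiable (f t) x) ->
  (* gradient bound *)
  (forall t, (1 <= t <= T)%N -> forall x, F x ->
     linf_norm (grad (f t) x) <= Ginf) ->
  0 < eta -> 0 <= beta2 < 1 ->
  (* AdaSGDMax iterates *)
  let g := fun t => grad (f t) (theta t) in
  let vhat := ada_vhat beta2 (fun t => l2_sq (g t)) in
  let eta_t := fun t => eta / Num.sqrt (t%:R * vhat t / d%:R) in
  F (theta 1%N) ->
  (forall t, (1 <= t < T)%N ->
     F (theta t.+1) /\
     forall y, F y ->
       l2_sq (theta t - eta_t t *: g t - theta t.+1)
         <= l2_sq (theta t - eta_t t *: g t - y)) ->
  0 < vhat 1%N ->
  forall thetastar, F thetastar ->
    \sum_(1 <= t < T.+1) f t (theta t) - \sum_(1 <= t < T.+1) f t thetastar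
      <= Dinf ^+ 2 * Num.sqrt (d%:R * vhat T * T%:R) / (2 * eta)
         + d%:R * Num.sqrt d%:R * Ginf ^+ 2 * eta
             * (2 * Num.sqrt T%:R - 1) / (2 * Num.sqrt (vhat 1%N)).
Proof.
move=> T0 cvx diam fcvx fdiff gbnd eta0 /andP[b0 b1] g vhat eta_t F1 proj v1 ts Fts.
have d0 : (0 < d)%N.
  rewrite lt0n; apply/eqP => d0; subst d.
  move: v1; rewrite /vhat /= /l2_sq big_ord0 !mulr0 addr0.
  by rewrite maxxx ltxx.
have dR : (0 : R) < d%:R by rewrite ltr0n.
have Fth : forall t, (1 <= t <= T)%N -> F (theta t).
  case=> [//|[|t]] ht; first exact: F1.
  have ht' : (1 <= t.+1 < T)%N by move: ht => /andP[_ h].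
  exact: (proj t.+1 ht').1.
have vmono : forall t, vhat t <= vhat t.+1.
  by move=> t; rewrite /vhat /= le_max lexx.
have v1t : forall t, (1 <= t)%N -> vhat 1%N <= vhat t.
  elim => [//|t IH] _; case: t IH => [|t] IH; first exact: lexx.
  exact: le_trans (IH isT) (vmono _).
have vpos : forall t, (1 <= t)%N -> 0 < vhat t.
  by move=> t ht; exact: lt_le_trans v1 (v1t t ht).
have spos : forall t, (1 <= t)%N -> 0 < t%:R * vhat t / d%:R.
  by move=> t ht; rewrite divr_gt0 // mulr_gt0 ?ltr0n ?vpos.
have etap : forall t, (1 <= t)%N -> 0 < eta_t t.
  by move=> t ht; rewrite divr_gt0 // sqrtr_gt0 spos.
pose u := fun t => theta t - ts.
pose A' := fun t => if (t <= T)%N then l2_sq (u t) else 0.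
pose w := fun t : nat => Num.sqrt (t%:R * vhat t / d%:R) / (2 * eta).
have step : forall t, (1 <= t <= T)%N ->
    f t (theta t) - f t ts <= w t * (A' t - A' t.+1) + eta_t t / 2 * l2_sq (g t).
  move=> t ht; have t1 : (1 <= t)%N by case/andP: ht.
  have := @step_lem R d F (f t) (theta t) ts (eta_t t) (A' t.+1) (fcvx t ht)
     (fdiff t ht _ (Fth t ht)) (Fth t ht) Fts (etap t t1).
  have hAn : A' t.+1 <= l2_sq (theta t - eta_t t *: grad (f t) (theta t) - ts).
    rewrite /A'; case: ifP => htT; last exact: l2_sq_ge0.
    have ht2 : (1 <= t < T)%N by rewrite t1.
    have [Fn Pm] := proj t ht2.
    exact: (proj_nonexp cvx Fn Pm Fts).
  move=> /(_ hAn).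
  have -> : A' t = l2_sq (theta t - ts) by rewrite /A' (andP ht).2.
  congr (_ <= _ + _); rewrite /w /eta_t; field.
  by rewrite !gt_eqF ?sqrtr_gt0 ?spos.
have sum1 : \sum_(1 <= t < T.+1) w t * (A' t - A' t.+1)
    <= w T * (d%:R * Dinf ^+ 2).
  have := @telesc R w A' (d%:R * Dinf ^+ 2) T T0.
  have -> : A' T.+1 = 0 by rewrite /A' ltnn.
  rewrite mulr0 addr0; apply.
  - move=> t ht; rewrite /A' (andP ht).2; apply: l2_le_linf; exact: diam (Fth t ht) Fts.
  - move=> t /andP[t1 _]; rewrite /w ler_pM2r ?invr_gt0 ?mulr_gt0 //.
    apply: ler_wsqrtr; rewrite ler_pM2r ?invr_gt0 //.
    apply: ler_pM; [exact: ler0n | exact: ltW (vpos t t1) | by rewrite ler_nat | exact: vmono].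
  - by rewrite /w divr_ge0 ?sqrtr_ge0 // ltW // mulr_gt0.
pose K := d%:R * Num.sqrt d%:R * Ginf ^+ 2 * eta / (2 * Num.sqrt (vhat 1%N)).
have sum2 : \sum_(1 <= t < T.+1) eta_t t / 2 * l2_sq (g t)
    <= K * (2 * Num.sqrt T%:R - 1).
  have G0 : 0 <= Ginf.
    have h1 : (1 <= 1 <= T)%N by rewrite leqnn T0.
    apply: le_trans (gbnd 1%N h1 _ F1).
    exact: le_trans (normr_ge0 _) (linf_ge _ (Ordinal d0)).
  have K0 : 0 <= K.
    apply: divr_ge0; last by rewrite mulr_ge0 // sqrtr_ge0.
    apply: mulr_ge0; [apply: mulr_ge0; [apply: mulr_ge0; [exact: ler0n | exact: sqrtr_ge0] | exact: sqr_ge0] | exact: ltW].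
  have H1 : \sum_(1 <= t < T.+1) eta_t t / 2 * l2_sq (g t) <=
      \sum_(1 <= t < T.+1) K * (Num.sqrt (t%:R : R))^-1.
    apply: ler_sum_nat => t ht; rewrite ltnS in ht.
    have t1 : (1 <= t)%N by case/andP: ht.
    have gb : l2_sq (g t) <= d%:R * Ginf ^+ 2.
      exact: l2_le_linf (gbnd t ht _ (Fth t ht)).
    apply: (@le_trans _ _ (eta_t t / 2 * (d%:R * Ginf ^+ 2))).
      by rewrite ler_wpM2l // divr_ge0 // ltW // etap.
    set sv := Num.sqrt (t%:R * vhat t / d%:R).
    set sd := Num.sqrt (d%:R : R).
    set q := Num.sqrt (t%:R : R) * Num.sqrt (vhat 1%N).
    have svp : 0 < sv by rewrite sqrtr_gt0 spos.
    have sdp : 0 < sd by rewrite sqrtr_gt0.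
    have stp : 0 < Num.sqrt (t%:R : R) by rewrite sqrtr_gt0 ltr0n.
    have s1p : 0 < Num.sqrt (vhat 1%N) by rewrite sqrtr_gt0.
    have qp : 0 < q by rewrite mulr_gt0.
    have qle : q <= sv * sd.
      rewrite /q /sv /sd -sqrtrM ?ler0n // -sqrtrM; last exact: ltW (spos t t1).
      rewrite ler_sqrt; last by rewrite mulr_ge0 ?ler0n // ltW // spos.
      have -> : t%:R * vhat t / d%:R * d%:R = t%:R * vhat t by field; rewrite gt_eqF.
      by rewrite ler_wpM2l ?ler0n // v1t.
    set c := d%:R * Ginf ^+ 2 * eta / 2.
    have c0 : 0 <= c.
      apply: divr_ge0 => //; apply: mulr_ge0; [apply: mulr_ge0; [exact: ler0n | exact: sqr_ge0] | exact: ltW].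
    have -> : eta_t t / 2 * (d%:R * Ginf ^+ 2) = c * sv^-1.
      by rewrite /eta_t -/sv /c; field; rewrite gt_eqF.
    have -> : K * (Num.sqrt t%:R)^-1 = c * (sd / q).
      by rewrite /K /c /q -/sd; field; rewrite !gt_eqF.
    rewrite ler_wpM2l // -subr_ge0.
    have -> : sd / q - sv^-1 = (sv * sd - q) / (q * sv) by field; rewrite !gt_eqF.
    by rewrite divr_ge0 ?subr_ge0 // ltW // mulr_gt0.
  apply: le_trans H1 _.
  by rewrite -mulr_sumr ler_wpM2l // sum_isqrt.
rewrite -sumrB.
apply: le_trans (ler_sum_nat (fun t (ht : (1 <= t < T.+1)%N) => step t ht)) _.
rewrite big_split /=.
have -> : Dinf ^+ 2 * Num.sqrt (d%:R * vhat T * T%:R) / (2 * eta)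
   = w T * (d%:R * Dinf ^+ 2).
  rewrite /w.
  have -> : d%:R * vhat T * T%:R = (T%:R * vhat T / d%:R) * d%:R ^+ 2.
    by field; rewrite gt_eqF.
  rewrite sqrtrM ?ltW ?spos // sqrtr_sqr ger0_norm ?ler0n //; field.
  by rewrite gt_eqF.
have -> : d%:R * Num.sqrt d%:R * Ginf ^+ 2 * eta * (2 * Num.sqrt T%:R - 1)
    / (2 * Num.sqrt (vhat 1%N)) = K * (2 * Num.sqrt T%:R - 1).
  by rewrite /K; field; rewrite gt_eqF // sqrtr_gt0.
exact: lerD.
Qed.
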